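(* For all integers $n \ge 1$ and $1 \le k \le n$, consideration probabilities are not identifiable in the Plackett--Luce with consideration (PL+C) model on the universe $\mathcal U=\{1,\dots,n\}$ with rankings of length $k$: there exist utilities $u_1,\dots,u_n$ and two distinct vectors of consideration probabilities $(p_1,\dots,p_n)\neq(p_1',\dots,p_n')$ with all entries in $(0,1]$ such that, with the utilities held fixed, both vectors induce exactly the same probability distribution over length-$k$ rankings.
   Context: PL+C model: universe $\mathcal U=\{1,\dots,n\}$, fixed ranking length $k\le n$. Each item $i$ has a utility $u_i$ and a consideration probability $p_i\in(0,1]$. A consideration set $C\subseteq\mathcal U$ is drawn by including each item $i$ independently with probability $p_i$, conditioned on $|C|\ge k$; i.e. for $|C|\ge k$, $\Pr_C(C)=\frac{1}{z_{k,p}}\prod_{i\in C}p_i\prod_{j\notin C}(1-p_j)$ with $z_{k,p}=\sum_{C:|C|\ge k}\prod_{i\in C}p_i\prod_{j\notin C}(1-p_j)$, and $\Pr_C(C)=0$ if $|C|<k$. Given $C$, a ranking $r=(r_1,\dots,r_k)$ of distinct items is produced by Plackett--Luce: $\Pr_{PL}(r\mid C)=\prod_{t=1}^k \frac{\exp(u_{r_t})}{\sum_{j\in C\setminus\{r_1,\dots,r_{t-1}\}}\exp(u_j)}$ if $\{r_1,\dots,r_k\}\subseteq C$, and $0$ otherwise. The PL+C probability of $r$ is $\Pr_{PLC}(r)=\sum_{C\subseteq\mathcal U}\Pr_C(C)\Pr_{PL}(r\mid C)$. *)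

(* Defs.v *)
From HB Require Import structures.
From mathcomp Require Import all_boot all_order all_algebra.
From mathcomp Require Import reals sequences exp.
Set Implicit Arguments. Unset Strict Implicit. Unset Printing Implicit Defensive.
Import Order.TTheory GRing.Theory Num.Theory.
Local Open Scope ring_scope.

Section PLC.
Variables (R : realType) (n k : nat).
Implicit Types (u p : {ffun 'I_n -> R}) (C : {set 'I_n}) (r : k.-tuple 'I_n).

Definition cweight p C : R :=
  (\prod_(i in C) p i) * (\prod_(j in ~: C) (1 - p j)).

Definition zkp p : R := \sum_(C : {set 'I_n} | (k <= #|C|)%N) cweight p C.

Definition PrC p C : R := if (k <= #|C|)%N then cweight p C / zkp p else 0.

Definition PrPL u C r : R :=
  if all (fun x => x \in C) r then
    \prod_(t < k)
      (expR (u (tnth r t)) /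
       \sum_(j in C | j \notin take t r) expR (u j))
  else 0.

Definition PrPLC u p r : R := \sum_(C : {set 'I_n}) PrC p C * PrPL u C r.

End PLC.

(* Main.v *)
Require Import Defs.
From HB Require Import structures.
From mathcomp Require Import all_boot all_order all_algebra.
From mathcomp Require Import reals sequences exp.
From mathcomp Require Import ring lra.
Import Order.TTheory GRing.Theory Num.Theory.
Local Open Scope ring_scope.

Lemma sum_card (R : realType) (T : finType) (A : {set T}) (F : nat -> R) :
  \sum_(D : {set T} | D \subset A) F #|D| = \sum_(m < #|A|.+1) 'C(#|A|, m)%:R * F m.
Proof.
transitivity (\sum_(D : {set T} | D \subset A) \sum_(m < #|A|.+1) (if #|D| == m then F m else 0)).
  apply: eq_bigr => D sDA.
  have lt : (#|D| < #|A|.+1)%N by rewrite ltnS subset_leq_card.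
  rewrite (bigD1 (Ordinal lt)) //= eqxx big1 ?addr0 // => i ne.
  case: eqP => // h; exfalso; move/negP: ne; apply; apply/eqP; apply: val_inj => /=; by rewrite h.
rewrite exchange_big; apply: eq_bigr => m _.
rewrite -big_mkcondr /=.
rewrite (eq_bigl (fun D => D \in [set D : {set T} | D \subset A & #|D| == m])); last by move=> D; rewrite inE.
by rewrite sumr_const cards_draws mulr_natl.
Qed.

Lemma sum_super (R : realType) (T : finType) (S : {set T}) (G : {set T} -> R) :
  \sum_(C : {set T} | S \subset C) G C = \sum_(D : {set T} | D \subset ~: S) G (S :|: D).
Proof.
rewrite (reindex_onto (fun D => S :|: D) (fun C => C :\: S)) /=; last first.
  by move=> C sSC; rewrite setDE setUIr setUCr setIT; exact/setUidPr.
apply: eq_bigl => D; rewrite subsetUl /= setDUl setDv set0U -disjoints_subset.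
by apply/eqP/setDidPl.
Qed.

Lemma prod_ffact (R : realType) m k :
  \prod_(t < k) (((m - t)%N)%:R : R)^-1 = ((m ^_ k)%:R)^-1.
Proof.
rewrite prodfV -natr_prod; congr ((_ %:R)^-1).
elim: k => [|k IH]; first by rewrite big_ord0 ffactn0.
by rewrite big_ord_recr /= IH ffactnSr.
Qed.

Lemma binff n k m : (k <= m)%N -> (m <= n)%N ->
  ('C(n - k, m - k) * n ^_ k = 'C(n, m) * m ^_ k)%N.
Proof.
move=> km mn.
rewrite -!bin_ffact.
have e1 := bin_fact mn.
have e2 := bin_fact km.
have kn : (k <= n)%N by apply: leq_trans mn.
have e3 := bin_fact kn.
have e4 : (m - k <= n - k)%N by rewrite leq_sub2r.
have e5 := bin_fact e4.
have h1 : (n - k - (m - k) = n - m)%N by rewrite subnBA // subnK.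
rewrite h1 in e5.
apply/eqP; rewrite -(eqn_pmul2r (_ : 0 < (m - k)`! * (n - m)`!)%N); last by rewrite muln_gt0 !fact_gt0.
apply/eqP.
transitivity ('C(n, k) * (k`! * (n - k)`!))%N; first by rewrite -e5; ring.
rewrite e3 -e1 -e2. ring.
Qed.

Lemma PrPL0 (R : realType) n k (C : {set 'I_n}) (r : k.-tuple 'I_n) :
  uniq r ->
  PrPL [ffun=> (0 : R)] C r =
  if [set x in r] \subset C then ((#|C| ^_ k)%:R)^-1 else 0.
Proof.
move=> ur; rewrite /PrPL.
have -> : all (fun x => x \in C) r = ([set x in r] \subset C).
  apply/allP/subsetP => H x; first by rewrite inE => /H.
  by move=> xr; apply: H; rewrite inE.
case: ifP => // sub.
rewrite -prod_ffact; apply: eq_bigr => t _.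
rewrite ffunE expR0 div1r; congr (_^-1).
under eq_bigr do rewrite ffunE expR0.
rewrite (eq_bigl (fun j => j \in C :\: [set x in take t r])); last first.
  by move=> j; rewrite !inE andbC.
rewrite sumr_const cardsDS; last first.
  apply: subset_trans sub; apply/subsetP => x; rewrite !inE; exact: mem_take.
have -> : #|[set x in take t r]| = t.
  rewrite cardsE; move/card_uniqP: (take_uniq t ur) ->.
  by rewrite size_take size_tuple ltn_ord.
by [].
Qed.

Lemma main (R : realType) n k (q : R) (r : k.-tuple 'I_n) :
  (k <= n)%N -> 0 < q <= 1 -> uniq r ->
  PrPLC [ffun=> (0 : R)] [ffun=> q] r = ((n ^_ k)%:R)^-1.
Proof.
move=> kn /andP[q0 q1] ur.
set w := fun m : nat => q ^+ m * (1 - q) ^+ (n - m).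
have w0 m : 0 <= w m by rewrite /w; apply: mulr_ge0; apply: exprn_ge0; lra.
have cardC (C : {set 'I_n}) : #|~: C| = (n - #|C|)%N.
  have hC : (#|C| <= n)%N by rewrite -[X in (_ <= X)%N](card_ord n) max_card.
  by apply/eqP; rewrite -(eqn_add2l #|C|) subnKC // cardsC card_ord.
have cw (C : {set 'I_n}) : cweight [ffun=> q] C = w #|C|.
  rewrite /cweight; under eq_bigr do rewrite ffunE.
  under [X in _ * X]eq_bigr do rewrite ffunE.
  rewrite !prodr_const.
  by rewrite cardC.
set S := [set x in r].
have cS : #|S| = k by rewrite cardsE; move/card_uniqP: ur ->; rewrite size_tuple.
pose z := zkp k ([ffun=> q] : {ffun 'I_n -> R}).
rewrite /PrPLC.
under eq_bigr => C _ do rewrite PrPL0 //.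
rewrite /PrC.
under eq_bigr => C _ do rewrite cw.
rewrite -/S.
change (zkp k [ffun=> q]) with z.
transitivity ((\sum_(C : {set 'I_n} | S \subset C) (w #|C| * ((#|C| ^_ k)%:R)^-1)) / z).
  rewrite mulr_suml [RHS]big_mkcond; apply: eq_bigr => C _.
  case: ifP => kC; case: ifP => sSC; rewrite ?mulr0 ?mul0r //.
    by rewrite mulrAC.
  by move: kC; rewrite -cS (subset_leq_card sSC).
rewrite sum_super.
under eq_bigr => D sD.
  rewrite cardsU (_ : S :&: D = set0) ?cards0 ?subn0; last first.
    by apply: disjoint_setI0; rewrite disjoint_sym disjoints_subset.
  over.
rewrite (@sum_card R _ _ (fun m => w (#|S| + m) * (((#|S| + m) ^_ k)%:R)^-1)) cardC cS.
have zE : z = \sum_(j < (n - k).+1) 'C(n, k + j)%:R * w (k + j).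
  rewrite /z /zkp.
  under eq_bigr do rewrite cw.
  rewrite big_mkcond (eq_bigl (fun D : {set 'I_n} => D \subset setT)); last first.
    by move=> D; rewrite subsetT.
  rewrite (@sum_card R _ _ (fun m => if (k <= m)%N then w m else 0)) cardsT card_ord.
  rewrite -(big_mkord (fun _ => true) (fun m => 'C(n, m)%:R * (if (k <= m)%N then w m else 0))) (big_cat_nat (leq0n k)) /=; last by rewrite ltnW.
  rewrite big_nat big1 ?add0r; last by move=> m /andP[_ mk]; rewrite leqNgt mk mulr0.
  rewrite -{1}(add0n k) big_addn subSn // big_mkord.
  by apply: eq_bigr => j _; rewrite addnC leq_addr.
set num := \sum_(_ < _) _.
have numE : num * (n ^_ k)%:R = z.
  rewrite zE mulr_suml; apply: eq_bigr => j _.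
  have jn : (j <= n - k)%N by rewrite -ltnS.
  have kj : (k + j <= n)%N by move: jn; rewrite -(leq_add2l k) subnKC.
  have e := @binff n k (k + j) (leq_addr j k) kj; rewrite addKn in e.
  move: e => /(congr1 (fun x => x%:R : R)); rewrite !natrM => e'.
  have ff0 : ((k + j) ^_ k)%:R != (0 : R).
    by rewrite pnatr_eq0 -lt0n ffact_gt0 leq_addr.
  rewrite mulrAC e' -mulrA; congr (_ * _).
  by rewrite mulrCA mulfV // mulr1.
have zpos : 0 < z.
  rewrite zE (bigD1 ord_max) //.
  have hw : 0 < 'C(n, k + @ord_max (n - k))%:R * w (k + @ord_max (n - k))%N.
    have -> : (k + @ord_max (n - k))%N = n by rewrite /= subnKC.
    by rewrite binn mul1r /w /= subnn expr0 mulr1 exprn_gt0.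
  apply: (lt_le_trans hw); rewrite lerDl.
  by apply: sumr_ge0 => i _; rewrite mulr_ge0.
have num0 : num != 0.
  by apply/eqP => h; move: zpos; rewrite -numE h mul0r ltxx.
rewrite -numE invfM mulrA mulfV // mul1r.
by [].
Qed.

Theorem theorem1 (R : realType) (n k : nat) :
  (1 <= n)%N -> (1 <= k)%N -> (k <= n)%N ->
  exists (u p p' : {ffun 'I_n -> R}),
    [/\ p != p',
        (forall i, 0 < p i <= 1),
        (forall i, 0 < p' i <= 1) &
        (forall r : k.-tuple 'I_n, uniq r ->
           PrPLC u p r = PrPLC u p' r)].
Proof.
move=> n1 k1 kn.
exists [ffun=> 0], [ffun=> 1], [ffun=> 2^-1]; split.
- apply/eqP => h.
  have := congr1 (fun f : {ffun 'I_n -> R} => f (Ordinal n1)) h.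
  rewrite !ffunE => e.
  have : (2 : R)^-1 < 1 by rewrite invf_lt1 // ltr1n.
  by rewrite -e ltxx.
- by move=> i; rewrite ffunE ltr01 lexx.
- move=> i; rewrite ffunE invr_gt0 ltr0n /= invf_le1 //.
  by rewrite ler1n.
- move=> r ur; rewrite !main //.
  + by rewrite invr_gt0 ltr0n /= invf_le1 // ler1n.
  + by rewrite ltr01 lexx.
Qed.
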